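(* Let $X$ be a reflexive Banach space over $\mathbb{K}\in\{\mathbb{R},\mathbb{C}\}$, let $W\subset\mathcal{B}$ be a non-empty compact set, and let $\mathcal{U}\subset\mathcal{W}(X)$ be a non-empty convex set. Let $[T]\in\mathcal{W}(X)$, $[L]\in\mathcal{U}$ and $r>0$. Then $[L]$ is a strongly unique best approximation to $[T]$ in $\mathcal{U}$ with constant $r$, i.e. $$\|[T]-[U]\|_W\ge\|[T]-[L]\|_W+r\|[U]-[L]\|_W\quad\text{for all }[U]\in\mathcal{U},$$ if and only if for every $[U]\in\mathcal{U}$ there exists $(x^*,x)\in W_{T-L}$ such that $$\operatorname{re}\big(x^*((U-L)x)\big)\le -r\,\|[U]-[L]\|_W.$$
   Context: $\mathcal{K}(X)$ denotes the space of compact linear operators $X\to X$. $\mathcal{B}=B_{X^*}\times B_X$ carries the product of the weak$^*$ topology on $B_{X^*}$ and the weak topology on $B_X$. For a fixed non-empty compact $W\subset\mathcal{B}$ and $L\in\mathcal{K}(X)$ put $\|L\|_W=\sup\{|x^*(Lx)|:(x^*,x)\in W\}$. $\mathcal{W}(X)$ is the quotient of $\mathcal{K}(X)$ by $L\sim T\iff\|L-T\|_W=0$, normed by $\|[L]\|_W=\|L\|_W$. In the complex case $Z=\bigcup_{\theta\in[0,2\pi]}\{(e^{i\theta}x^*,x):(x^*,x)\in W\}$; in the real case $Z=W\cup\{(-x^*,x):(x^*,x)\in W\}$. For $[S]\in\mathcal{W}(X)$, $W_S=\{(x^*,x)\in Z: x^*(Sx)=\|[S]\|_W\}$. The values $x^*(Sx)$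 for $(x^*,x)\in Z$ do not depend on the chosen representatives. $\operatorname{re}$ denotes the real part. *)

(* Defs.v *)
From Stdlib Require Import Reals Lra List ClassicalEpsilon.
Open Scope R_scope.

Inductive Kind := KReal | KComplex.

(* complex numbers as pairs (re, im) *)
Definition Cplx : Type := (R * R)%type.

Definition scal (k : Kind) : Type :=
  match k with KReal => R | KComplex => Cplx end.

Definition sadd (k : Kind) : scal k -> scal k -> scal k :=
  match k as k0 return scal k0 -> scal k0 -> scal k0 with
  | KReal => Rplus
  | KComplex => fun a b => (fst a + fst b, snd a + snd b)
  end.

Definition smul (k : Kind) : scal k -> scal k -> scal k :=
  match k as k0 return scal k0 -> scal k0 -> scal k0 with
  | KReal => Rmult
  | KComplex => fun a b => (fst a * fst b - snd a * snd b,
                            fst a * snd b + snd a * fst b)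
  end.

Definition sopp (k : Kind) : scal k -> scal k :=
  match k as k0 return scal k0 -> scal k0 with
  | KReal => Ropp
  | KComplex => fun a => (- fst a, - snd a)
  end.

Definition ssub (k : Kind) (a b : scal k) : scal k := sadd k a (sopp k b).

Definition sofR (k : Kind) : R -> scal k :=
  match k as k0 return R -> scal k0 with
  | KReal => fun a => a
  | KComplex => fun a => (a, 0)
  end.

Definition sone (k : Kind) : scal k := sofR k 1.

Definition sabs (k : Kind) : scal k -> R :=
  match k as k0 return scal k0 -> R with
  | KReal => Rabs
  | KComplex => fun a => sqrt (fst a * fst a + snd a * snd a)
  end.

Definition sre (k : Kind) : scal k -> R :=
  match k as k0 return scal k0 -> R with
  | KReal => fun a => a
  | KComplex => fun a => fst a
  end.

Definition Zscalar (k : Kind) : scal k -> Prop :=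
  match k as k0 return scal k0 -> Prop with
  | KReal => fun a => a = 1 \/ a = -1
  | KComplex => fun a => exists theta, 0 <= theta <= 2 * PI /\ a = (cos theta, sin theta)
  end.

Record NormedSpace (k : Kind) := {
  carrier :> Type;
  vzero : carrier;
  vadd : carrier -> carrier -> carrier;
  vopp : carrier -> carrier;
  vscal : scal k -> carrier -> carrier;
  vnorm : carrier -> R;
  vaddA : forall x y z, vadd x (vadd y z) = vadd (vadd x y) z;
  vaddC : forall x y, vadd x y = vadd y x;
  vadd0 : forall x, vadd x vzero = x;
  vaddN : forall x, vadd x (vopp x) = vzero;
  vscal1 : forall x, vscal (sone k) x = x;
  vscalA : forall a b x, vscal a (vscal b x) = vscal (smul k a b) x;
  vscalDr : forall a x y, vscal a (vadd x y) = vadd (vscal a x) (vscal a y);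
  vscalDl : forall a b x, vscal (sadd k a b) x = vadd (vscal a x) (vscal b x);
  vnorm_ge0 : forall x, 0 <= vnorm x;
  vnorm_eq0 : forall x, vnorm x = 0 -> x = vzero;
  vnorm_scal : forall a x, vnorm (vscal a x) = sabs k a * vnorm x;
  vnorm_tri : forall x y, vnorm (vadd x y) <= vnorm x + vnorm y
}.

Arguments vzero {k X} : rename.
Arguments vadd {k X} _ _ : rename.
Arguments vopp {k X} _ : rename.
Arguments vscal {k X} _ _ : rename.
Arguments vnorm {k X} _ : rename.

Section Banach.
Context {k : Kind} {X : NormedSpace k}.

Definition vsub (x y : X) : X := vadd x (vopp y).

Definition converges (u : nat -> X) (l : X) : Prop :=
  forall eps, 0 < eps -> exists N, forall n, (N <= n)%nat -> vnorm (vsub (u n) l) < eps.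

Definition cauchy (u : nat -> X) : Prop :=
  forall eps, 0 < eps -> exists N, forall n m, (N <= n)%nat -> (N <= m)%nat ->
    vnorm (vsub (u n) (u m)) < eps.

Definition banach : Prop := forall u : nat -> X, cauchy u -> exists l, converges u l.

(* supremum of a set of reals (meaningful when the l.u.b. exists) *)
Definition Rsup (E : R -> Prop) : R := epsilon (inhabits 0) (fun m => is_lub E m).

Definition is_dual (f : X -> scal k) : Prop :=
  (forall x y, f (vadd x y) = sadd k (f x) (f y)) /\
  (forall a x, f (vscal a x) = smul k a (f x)) /\
  (exists C, forall x, sabs k (f x) <= C * vnorm x).

Definition dnorm (f : X -> scal k) : R :=
  Rsup (fun v => exists x, vnorm x <= 1 /\ v = sabs k (f x)).

Definition is_bidual (phi : (X -> scal k) -> scal k) : Prop :=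
  (forall f g, is_dual f -> is_dual g ->
     phi (fun x => sadd k (f x) (g x)) = sadd k (phi f) (phi g)) /\
  (forall a f, is_dual f -> phi (fun x => smul k a (f x)) = smul k a (phi f)) /\
  (exists C, forall f, is_dual f -> sabs k (phi f) <= C * dnorm f).

Definition reflexive : Prop :=
  forall phi, is_bidual phi -> exists x : X, forall f, is_dual f -> phi f = f x.

Definition inB (p : (X -> scal k) * X) : Prop :=
  is_dual (fst p) /\ dnorm (fst p) <= 1 /\ vnorm (snd p) <= 1.

(* relatively open subsets of B for the product of the weak* topology on
   B_{X^*} and the weak topology on B_X (basic neighbourhoods given by
   finitely many points of X and finitely many functionals of X^* ) *)
Definition B_open (O : (X -> scal k) * X -> Prop) : Prop :=
  forall p, inB p -> O p ->
    exists (xs : list X) (fs : list (X -> scal k)) (eps : R),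
      0 < eps /\ (forall f, In f fs -> is_dual f) /\
      forall q, inB q ->
        (forall x, In x xs -> sabs k (ssub k (fst q x) (fst p x)) < eps) ->
        (forall f, In f fs -> sabs k (ssub k (f (snd q)) (f (snd p))) < eps) ->
        O q.

Definition compactB (W : (X -> scal k) * X -> Prop) : Prop :=
  (forall p, W p -> inB p) /\
  forall (I : Type) (O : I -> (X -> scal k) * X -> Prop),
    (forall i, B_open (O i)) ->
    (forall p, W p -> exists i, O i p) ->
    exists l : list I, forall p, W p -> exists i, In i l /\ O i p.

Definition compact_op (L : X -> X) : Prop :=
  (forall x y, L (vadd x y) = vadd (L x) (L y)) /\
  (forall a x, L (vscal a x) = vscal a (L x)) /\
  (forall u : nat -> X, (forall n, vnorm (u n) <= 1) ->
     exists phi : nat -> nat, (forall n, (phi n < phi (S n))%nat) /\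
       exists l, converges (fun n => L (u (phi n))) l).

Definition opsub (L T : X -> X) : X -> X := fun x => vsub (L x) (T x).

Definition normW (W : (X -> scal k) * X -> Prop) (L : X -> X) : R :=
  Rsup (fun v => exists p, W p /\ v = sabs k (fst p (L (snd p)))).

Definition inZ (W : (X -> scal k) * X -> Prop) (p : (X -> scal k) * X) : Prop :=
  exists (g : X -> scal k) (lam : scal k),
    Zscalar k lam /\ W (g, snd p) /\ forall y, fst p y = smul k lam (g y).

Definition inWS (W : (X -> scal k) * X -> Prop) (S : X -> X) (p : (X -> scal k) * X) : Prop :=
  inZ W p /\ fst p (S (snd p)) = sofR k (normW W S).

(* A set of classes in W(X) is represented by the (saturated) set of all
   its representatives in K(X). *)
Definition saturated (W : (X -> scal k) * X -> Prop) (U : (X -> X) -> Prop) : Prop :=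
  forall L T, U L -> compact_op T -> normW W (opsub L T) = 0 -> U T.

Definition convexU (U : (X -> X) -> Prop) : Prop :=
  forall L1 L2 t, U L1 -> U L2 -> 0 <= t <= 1 ->
    U (fun x => vadd (vscal (sofR k t) (L1 x)) (vscal (sofR k (1 - t)) (L2 x))).

End Banach.

Arguments banach {k} X.
Arguments reflexive {k} X.

(* Main.v *)
Require Import Defs.
From Stdlib Require Import Reals Lra Lia List ClassicalEpsilon Classical FunctionalExtensionality.
Open Scope R_scope.

Ltac sdes := repeat match goal with
  | a : scal KComplex |- _ => destruct a
  | a : Cplx |- _ => destruct a
  | a : (R * R)%type |- _ => destruct a end.
Ltac seq k := destruct k; simpl in *; [ring | sdes; simpl; f_equal; ring].

Lemma ofR_add k x y : sadd k (sofR k x) (sofR k y) = sofR k (x + y).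
Proof. seq k. Qed.
Lemma ofR_mul k x y : smul k (sofR k x) (sofR k y) = sofR k (x * y).
Proof. seq k. Qed.
Lemma smul_0l k a : smul k (sofR k 0) a = sofR k 0.
Proof. seq k. Qed.
Lemma smul_m1 k a : smul k (sofR k (-1)) a = sopp k a.
Proof. seq k. Qed.

Lemma sq2_pos x y : 0 <= x*x + y*y.
Proof. apply Rplus_le_le_0_compat; apply Rle_0_sqr. Qed.
Lemma cabs_ge0 x y : 0 <= sqrt (x*x + y*y).
Proof. apply sqrt_pos. Qed.

Lemma sabs_ge0 k a : 0 <= sabs k a.
Proof. destruct k; simpl. apply Rabs_pos. apply sqrt_pos. Qed.

Lemma sqrt_ge_abs x y : Rabs x <= sqrt (x*x + y*y).
Proof.
  rewrite <- sqrt_Rsqr_abs. apply sqrt_le_1_alt. unfold Rsqr. nra.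
Qed.

Lemma sre_le k a : sre k a <= sabs k a.
Proof. destruct k; simpl. apply Rle_abs. sdes; simpl.
  pose proof (sqrt_ge_abs r r0). pose proof (Rle_abs r). lra. Qed.
Lemma sre_ge k a : - sabs k a <= sre k a.
Proof. destruct k; simpl. pose proof (Rabs_Ropp a). pose proof (Rle_abs (-a)). lra.
  sdes; simpl. pose proof (sqrt_ge_abs r r0). pose proof (Rabs_Ropp r).
  pose proof (Rle_abs (-r)). lra. Qed.

Lemma sabs_mul k a b : sabs k (smul k a b) = sabs k a * sabs k b.
Proof. destruct k; simpl. apply Rabs_mult. sdes; simpl.
  rewrite <- sqrt_mult by apply sq2_pos. f_equal. ring. Qed.

Lemma sqrt_tri a b c d :
  sqrt ((a+c)*(a+c) + (b+d)*(b+d)) <= sqrt (a*a+b*b) + sqrt (c*c+d*d).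
Proof.
  pose proof (sqrt_pos (a*a+b*b)). pose proof (sqrt_pos (c*c+d*d)).
  rewrite <- (sqrt_square (sqrt (a*a+b*b) + sqrt (c*c+d*d))) by lra.
  apply sqrt_le_1_alt.
  assert (Hs : sqrt (a*a+b*b) * sqrt (c*c+d*d) >= a*c+b*d).
  { rewrite <- sqrt_mult by apply sq2_pos.
    destruct (Rle_or_lt (a*c+b*d) 0). pose proof (sqrt_pos ((a*a+b*b)*(c*c+d*d))). lra.
    rewrite <- (sqrt_square (a*c+b*d)) by lra. apply Rle_ge, sqrt_le_1_alt.
    assert (0 <= (a*d-b*c)*(a*d-b*c)) by apply Rle_0_sqr. nra. }
  pose proof (sqrt_sqrt (a*a+b*b)). pose proof (sqrt_sqrt (c*c+d*d)). nra.
Qed.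

Lemma sabs_add k a b : sabs k (sadd k a b) <= sabs k a + sabs k b.
Proof. destruct k; simpl. apply Rabs_triang. sdes; simpl. apply sqrt_tri. Qed.

Lemma sabs_opp k a : sabs k (sopp k a) = sabs k a.
Proof. destruct k; simpl. apply Rabs_Ropp. sdes; simpl. f_equal; ring. Qed.

Lemma sabs_ofR k x : sabs k (sofR k x) = Rabs x.
Proof. destruct k; simpl. auto. rewrite <- sqrt_Rsqr_abs. f_equal. unfold Rsqr; ring. Qed.

Lemma sre_add k a b : sre k (sadd k a b) = sre k a + sre k b.
Proof. destruct k; simpl; auto. Qed.
Lemma sre_opp k a : sre k (sopp k a) = - sre k a.
Proof. destruct k; simpl; auto. Qed.
Lemma sre_ofR k x : sre k (sofR k x) = x.
Proof. destruct k; simpl; auto. Qed.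

Lemma Zs_abs k l : Zscalar k l -> sabs k l = 1.
Proof. destruct k; simpl.
  intros [->| ->]; unfold Rabs; destruct Rcase_abs; lra.
  intros [t [_ ->]]. simpl.
  replace (cos t * cos t + sin t * sin t) with 1 by (rewrite <- (sin2_cos2 t); unfold Rsqr; ring). apply sqrt_1.
Qed.

Lemma cont_abs (f : R -> R) x : continuity_pt f x -> continuity_pt (fun t => Rabs (f t)) x.
Proof. intros H. apply (continuity_pt_comp f Rabs). auto. apply Rcontinuity_abs. Qed.
Lemma cont_max (f g : R -> R) x : continuity_pt f x -> continuity_pt g x -> continuity_pt (fun t => Rmax (f t) (g t)) x.
Proof. intros Hf Hg.
  replace (fun t => Rmax (f t) (g t)) with (fun t => (f t + g t + Rabs (f t - g t)) / 2).
  2:{ apply functional_extensionality; intro t. unfold Rmax, Rabs. destruct Rle_dec; destruct Rcase_abs; lra. }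
  unfold Rdiv. apply (continuity_pt_mult (fun t => f t + g t + Rabs (f t - g t)) (fun _ => / 2)).
  apply (continuity_pt_plus (fun t => f t + g t)). apply continuity_pt_plus; auto.
  apply cont_abs. apply continuity_pt_minus; auto.
  apply continuity_pt_const. intros a b; auto.
Qed.

Lemma polar u v : u*u + v*v = 1 -> exists t, 0 <= t <= 2 * PI /\ cos t = u /\ sin t = v.
Proof.
  intros H. assert (Hu : -1 <= u <= 1) by nra.
  pose proof (acos_bound u). pose proof (cos_acos u Hu). pose proof (sin_acos u Hu).
  assert (Hs : sqrt (1 - u²) = Rabs v).
  { rewrite <- sqrt_Rsqr_abs. f_equal. unfold Rsqr. lra. }
  pose proof PI_RGT_0.
  destruct (Rle_or_lt 0 v).
  - exists (acos u). split. lra. split. auto. rewrite H2, Hs. apply Rabs_right; lra.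
  - exists (2 * PI - acos u). split. lra. rewrite cos_minus, sin_minus, cos_2PI, sin_2PI, H1, H2, Hs.
    rewrite Rabs_left by lra. split; ring.
Qed.

Lemma Zs_exists k z : exists l, Zscalar k l /\ sre k (smul k l z) = sabs k z.
Proof.
  destruct k; simpl.
  - destruct (Rle_or_lt 0 z).
    + exists 1. split. auto. rewrite Rabs_right; lra.
    + exists (-1). split. auto. rewrite Rabs_left; lra.
  - destruct z as [x y]. simpl.
    pose proof (sqrt_pos (x*x+y*y)) as Hn.
    pose proof (sqrt_sqrt (x*x+y*y) (sq2_pos x y)) as Hnn.
    destruct (Req_dec (sqrt (x*x+y*y)) 0) as [H0|H0].
    + exists (cos 0, sin 0). split. exists 0. split. pose proof PI_RGT_0; lra. auto.
      simpl. rewrite cos_0, sin_0, H0. rewrite H0 in Hnn.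
      assert (Hx : x * x <= 0) by (pose proof (Rle_0_sqr y); unfold Rsqr in *; lra).
      assert (x = 0) by (pose proof (Rle_0_sqr x); unfold Rsqr in *; nra). subst; ring.
    + set (n := sqrt (x*x+y*y)) in *.
      destruct (polar (x/n) (-y/n)) as [t [Ht [Hc Hs]]].
      { replace (x / n * (x / n) + - y / n * (- y / n)) with ((x*x+y*y)/(n*n)) by (field; auto).
        rewrite <- Hnn. field. auto. }
      exists (cos t, sin t). split. exists t. auto. simpl. rewrite Hc, Hs.
      replace (x / n * x - - y / n * y) with ((x*x+y*y)/n) by (field; auto).
      rewrite <- Hnn. field. auto.
Qed.

Lemma Zs_min k a b M c :
  (forall l, Zscalar k l -> M - sre k (smul k l a) > 0 \/ sre k (smul k l b) + c > 0) ->
  exists m, 0 < m /\ forall l, Zscalar k l ->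
     Rmax (M - sre k (smul k l a)) (sre k (smul k l b) + c) >= m.
Proof.
  intros H. destruct k; simpl in *.
  - set (f := fun l => Rmax (M - l * a) (l * b + c)).
    assert (H1 : f 1 > 0). { unfold f. destruct (H 1) as [h|h]; auto; unfold Rmax; destruct Rle_dec; lra. }
    assert (H2 : f (-1) > 0). { unfold f. destruct (H (-1)) as [h|h]; auto; unfold Rmax; destruct Rle_dec; lra. }
    exists (Rmin (f 1) (f (-1))). split. apply Rmin_glb_lt; auto.
    intros l [-> | ->]; fold (f 1); fold (f (-1)).
    apply Rle_ge, Rmin_l. apply Rle_ge, Rmin_r.
  - destruct a as [a1 a2], b as [b1 b2]. simpl in *.
    set (f := fun t => Rmax (M - (cos t * a1 - sin t * a2)) (cos t * b1 - sin t * b2 + c)).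
    pose proof PI_RGT_0.
    destruct (continuity_ab_min f 0 (2 * PI)) as [t0 [Hmin Ht0]]. lra.
    { intros c0 _. unfold f. apply cont_max; reg. }
    exists (f t0). split.
    + assert (Z : exists t, 0 <= t <= 2 * PI /\ (cos t0, sin t0) = (cos t, sin t)) by (exists t0; auto).
      destruct (H _ Z) as [h|h]; simpl in h; unfold f, Rmax; destruct Rle_dec; lra.
    + intros l [t [Ht ->]]. simpl. apply Rle_ge, (Hmin t Ht).
Qed.

Lemma re_lip k l u v : Zscalar k l ->
  sre k (smul k l u) - sre k (smul k l v) <= sabs k (ssub k u v).
Proof.
  intros Hl. pose proof (sre_le k (smul k l (ssub k u v))) as H.
  rewrite sabs_mul, Zs_abs in H by auto.
  replace (sre k (smul k l u) - sre k (smul k l v)) with (sre k (smul k l (ssub k u v))). lra.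
  unfold ssub. destruct k; simpl; sdes; simpl; ring.
Qed.

Lemma sabs_Zmul k l z : Zscalar k l -> sabs k (smul k l z) = sabs k z.
Proof. intros. rewrite sabs_mul, Zs_abs by auto. ring. Qed.

Lemma scal_eqM k z M : M <= sre k z -> sabs k z <= M -> z = sofR k M.
Proof.
  destruct k; simpl.
  - intros. pose proof (Rle_abs z). lra.
  - destruct z as [x y]; simpl. intros H1 H2.
    pose proof (sqrt_ge_abs x y). pose proof (Rle_abs x).
    pose proof (sqrt_sqrt (x*x+y*y) (sq2_pos x y)).
    assert (x = M) by lra. subst.
    assert (Hs : sqrt (M*M+y*y) = M) by lra. rewrite Hs in *.
    assert (Hy : y * y = 0) by lra.
    f_equal. destruct (Rmult_integral _ _ Hy); auto.
Qed.

Lemma Rsup_lub (E : R -> Prop) : (exists v, E v) -> (exists B, forall v, E v -> v <= B) ->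
  is_lub E (Rsup E).
Proof.
  intros Hne [B HB].
  destruct (completeness E) as [m Hm]. exists B. intros v Hv; apply HB; auto. auto.
  unfold Rsup. apply (epsilon_spec (inhabits 0) (fun m => is_lub E m)). exists m; auto.
Qed.

Lemma lub_ub E m v : is_lub E m -> E v -> v <= m.
Proof. intros [H _] Hv. apply H; auto. Qed.

Lemma lub_approx E m eps : is_lub E m -> 0 < eps -> exists v, E v /\ m - eps < v.
Proof.
  intros [H1 H2] He. apply NNPP; intro Hn.
  assert (m <= m - eps). { apply H2. intros v Hv. apply Rnot_lt_le. intro. apply Hn. exists v; auto. }
  lra.
Qed.

Arguments vaddA {k n} x y z. Arguments vaddC {k n} x y. Arguments vadd0 {k n} x.
Arguments vaddN {k n} x. Arguments vscal1 {k n} x. Arguments vscalA {k n} a b x.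
Arguments vscalDr {k n} a x y. Arguments vscalDl {k n} a b x. Arguments vnorm_ge0 {k n} x.
Arguments vnorm_eq0 {k n} x _. Arguments vnorm_scal {k n} a x. Arguments vnorm_tri {k n} x y.
Section V.
Context {k : Kind} {X : NormedSpace k}.

Lemma vadd0l (x : X) : vadd vzero x = x.
Proof. rewrite vaddC. apply vadd0. Qed.

Lemma vopp_uniq (x z : X) : vadd x z = vzero -> z = vopp x.
Proof.
  intros H. rewrite <- (vadd0 z). rewrite <- (vaddN x). rewrite vaddA.
  rewrite (vaddC z x), H. apply vadd0l.
Qed.

Lemma vadd_self (y : X) : vadd y y = y -> y = vzero.
Proof.
  intros H. rewrite <- (vaddN y). rewrite <- H at 2. rewrite <- vaddA, vaddN, vadd0. auto.
Qed.

Lemma vscal0 (x : X) : vscal (sofR k 0) x = vzero.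
Proof.
  apply vadd_self. rewrite <- vscalDl. rewrite ofR_add. f_equal. f_equal. ring.
Qed.

Lemma vopp_scal (x : X) : vopp x = vscal (sofR k (-1)) x.
Proof.
  symmetry. apply vopp_uniq. rewrite <- (vscal1 x) at 1. unfold sone.
  rewrite <- vscalDl, ofR_add. replace (1 + -1) with 0 by ring. apply vscal0.
Qed.

Lemma vnorm_zero : vnorm (@vzero k X) = 0.
Proof. rewrite <- (vscal0 vzero), vnorm_scal, sabs_ofR, Rabs_R0. ring. Qed.

Lemma vnorm_opp (x : X) : vnorm (vopp x) = vnorm x.
Proof. rewrite vopp_scal, vnorm_scal, sabs_ofR. unfold Rabs; destruct Rcase_abs; lra. Qed.

Lemma vopp_add (x y : X) : vopp (vadd x y) = vadd (vopp x) (vopp y).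
Proof. rewrite !vopp_scal, vscalDr. auto. Qed.

Lemma vopp_opp (x : X) : vopp (vopp x) = x.
Proof. symmetry. apply vopp_uniq. rewrite vaddC. apply vaddN. Qed.

Lemma vsub_decomp (x y z : X) : vsub x z = vadd (vsub x y) (vsub y z).
Proof.
  unfold vsub. rewrite <- vaddA. f_equal. rewrite vaddA, (vaddC (vopp y) y), vaddN. symmetry; apply vadd0l.
Qed.

Lemma vsub_opp (x y : X) : vsub y x = vopp (vsub x y).
Proof. unfold vsub. rewrite vopp_add, vopp_opp, vaddC. auto. Qed.

Lemma vnorm_sub_sym (x y : X) : vnorm (vsub x y) = vnorm (vsub y x).
Proof. rewrite vsub_opp, vnorm_opp. auto. Qed.

Lemma vsub_tri (x y z : X) : vnorm (vsub x z) <= vnorm (vsub x y) + vnorm (vsub y z).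
Proof. rewrite (vsub_decomp x y z). apply vnorm_tri. Qed.

Lemma vnorm_le_sub (a y : X) : vnorm a <= vnorm (vsub a y) + vnorm y.
Proof.
  replace a with (vadd (vsub a y) y) at 1. apply vnorm_tri.
  unfold vsub. rewrite <- vaddA, (vaddC (vopp y) y), vaddN, vadd0. auto.
Qed.

Lemma vnorm_sub_le (a b : X) : vnorm (vsub a b) <= vnorm a + vnorm b.
Proof. unfold vsub. rewrite <- (vnorm_opp b). apply vnorm_tri. Qed.

Lemma vnorm_eq0' (x : X) : vnorm x = 0 -> x = vzero.
Proof. apply vnorm_eq0. Qed.

Lemma unit_decomp (y : X) : 0 < vnorm y ->
  vnorm (vscal (sofR k (/ vnorm y)) y) = 1 /\
  y = vscal (sofR k (vnorm y)) (vscal (sofR k (/ vnorm y)) y).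
Proof.
  intros H. split.
  - rewrite vnorm_scal, sabs_ofR, Rabs_right. field. lra. apply Rle_ge, Rlt_le, Rinv_0_lt_compat; auto.
  - rewrite vscalA, ofR_mul, Rinv_r by lra. symmetry. apply vscal1.
Qed.

Lemma dual0 (f : X -> scal k) : is_dual f -> f vzero = sofR k 0.
Proof. intros [_ [Hs _]]. rewrite <- (vscal0 vzero), Hs. apply smul_0l. Qed.

Lemma dual_opp (f : X -> scal k) x : is_dual f -> f (vopp x) = sopp k (f x).
Proof. intros Hf. pose proof Hf as [_ [Hs _]]. rewrite vopp_scal, Hs. apply smul_m1. Qed.

Lemma dual_sub (f : X -> scal k) x y : is_dual f -> f (vsub x y) = ssub k (f x) (f y).
Proof. intros Hf. pose proof Hf as [Ha _]. unfold vsub, ssub. rewrite Ha, dual_opp; auto. Qed.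

Lemma dual_scale_bound (f : X -> scal k) C : is_dual f ->
  (forall x, vnorm x <= 1 -> sabs k (f x) <= C) -> forall y, sabs k (f y) <= C * vnorm y.
Proof.
  intros Hf HC y. pose proof Hf as [_ [Hs _]].
  pose proof (vnorm_ge0 y).
  destruct (Req_dec (vnorm y) 0) as [H0|H0].
  - rewrite (vnorm_eq0 _ H0), dual0, sabs_ofR, Rabs_R0, vnorm_zero; auto. lra.
  - destruct (unit_decomp y) as [H1 H2]. lra.
    rewrite H2 at 1. rewrite Hs, sabs_mul, sabs_ofR, Rabs_right by lra.
    rewrite Rmult_comm. apply Rmult_le_compat_r. lra. apply HC. lra.
Qed.

Lemma dnorm_bound (f : X -> scal k) x : is_dual f -> vnorm x <= 1 -> sabs k (f x) <= dnorm f.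
Proof.
  intros Hf Hx. pose proof Hf as [_ [_ [C HC]]].
  assert (Hl : is_lub (fun v => exists x, vnorm x <= 1 /\ v = sabs k (f x)) (dnorm f)).
  { apply Rsup_lub. exists (sabs k (f vzero)), vzero. split; auto. rewrite vnorm_zero; lra.
    exists (Rabs C). intros v [z [Hz ->]]. eapply Rle_trans. apply HC.
    pose proof (vnorm_ge0 z). pose proof (Rle_abs C). pose proof (Rabs_pos C).
    assert (C * vnorm z <= Rabs C * vnorm z) by (apply Rmult_le_compat_r; lra).
    assert (Rabs C * vnorm z <= Rabs C * 1) by (apply Rmult_le_compat_l; lra). lra. }
  apply (lub_ub _ _ _ Hl). exists x; auto.
Qed.

Lemma dual_bound (f : X -> scal k) y : is_dual f -> dnorm f <= 1 -> sabs k (f y) <= vnorm y.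
Proof.
  intros Hf Hd. pose proof (dual_scale_bound f 1 Hf) as H.
  rewrite <- (Rmult_1_l (vnorm y)). apply H. intros x Hx. eapply Rle_trans.
  apply dnorm_bound; auto. auto.
Qed.

End V.

Lemma ssub_tri k a b c : sabs k (ssub k a c) <= sabs k (ssub k a b) + sabs k (ssub k b c).
Proof.
  replace (ssub k a c) with (sadd k (ssub k a b) (ssub k b c)). apply sabs_add.
  unfold ssub; seq k.
Qed.
Lemma ssub_sym k a b : sabs k (ssub k a b) = sabs k (ssub k b a).
Proof.
  replace (ssub k a b) with (sopp k (ssub k b a)). apply sabs_opp. unfold ssub; seq k.
Qed.
Lemma ssub_diff k u1 u2 v1 v2 :
  sabs k (ssub k (ssub k u1 u2) (ssub k v1 v2)) <= sabs k (ssub k u1 v1) + sabs k (ssub k u2 v2).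
Proof.
  replace (ssub k (ssub k u1 u2) (ssub k v1 v2)) with (ssub k (ssub k u1 v1) (ssub k u2 v2)).
  2:{ unfold ssub; seq k. }
  unfold ssub at 1. eapply Rle_trans. apply sabs_add. rewrite sabs_opp. lra.
Qed.

Section O.
Context {k : Kind} {X : NormedSpace k}.

Definition opbnd (A : X -> X) := exists C, forall x, vnorm x <= 1 -> vnorm (A x) <= C.

Lemma hom_scale_bound (f : X -> scal k) C :
  (forall a x, f (vscal a x) = smul k a (f x)) ->
  (forall x, vnorm x <= 1 -> sabs k (f x) <= C) -> forall y, sabs k (f y) <= C * vnorm y.
Proof.
  intros Hs HC y.
  pose proof (vnorm_ge0 y).
  destruct (Req_dec (vnorm y) 0) as [H0|H0].
  - rewrite (vnorm_eq0 _ H0), <- (vscal0 vzero), Hs, smul_0l, sabs_ofR, Rabs_R0, vscal0, vnorm_zero.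
    specialize (HC vzero). rewrite vnorm_zero in HC. pose proof (sabs_ge0 k (f vzero)). nra.
  - destruct (unit_decomp y) as [H1 H2]. lra.
    rewrite H2 at 1. rewrite Hs, sabs_mul, sabs_ofR, Rabs_right by lra.
    rewrite Rmult_comm. apply Rmult_le_compat_r. lra. apply HC. lra.
Qed.

Lemma TB (A : X -> X) eps : compact_op A -> 0 < eps ->
  exists ys, forall x, vnorm x <= 1 -> exists y, In y ys /\ vnorm (vsub (A x) y) < eps.
Proof.
  intros [_ [_ HA]] He. apply NNPP; intro Hn.
  assert (H : forall ys : list X, exists x, vnorm x <= 1 /\ forall y, In y ys -> eps <= vnorm (vsub (A x) y)).
  { intros ys. apply NNPP; intro H1. apply Hn. exists ys. intros x Hx.
    apply NNPP; intro H2. apply H1. exists x. split; auto. intros y Hy.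
    apply Rnot_lt_le. intro. apply H2. exists y; auto. }
  set (F := fun ys => proj1_sig (constructive_indefinite_description _ (H ys))).
  assert (HF : forall ys, vnorm (F ys) <= 1 /\ forall y, In y ys -> eps <= vnorm (vsub (A (F ys)) y)).
  { intros ys. unfold F. destruct constructive_indefinite_description; simpl; auto. }
  set (pre := nat_rect (fun _ => list X) nil (fun n l => F (map A l) :: l)).
  set (u := fun n => F (map A (pre n))).
  assert (Hin : forall n i, (i < n)%nat -> In (u i) (pre n)).
  { induction n; intros i Hi. lia. simpl. destruct (Nat.eq_dec i n). subst; left; auto.
    right. apply IHn. lia. }
  assert (Hsep : forall n i, (i < n)%nat -> eps <= vnorm (vsub (A (u n)) (A (u i)))).
  { intros n i Hi. apply (proj2 (HF (map A (pre n)))). apply in_map. auto. }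
  destruct (HA u) as [phi [Hphi [l Hl]]]. intros n; apply HF.
  destruct (Hl (eps/2)) as [N HN]. lra.
  assert (Hmono : (phi N < phi (S N))%nat) by apply Hphi.
  pose proof (Hsep _ _ Hmono).
  pose proof (HN (S N) ltac:(lia)). pose proof (HN N ltac:(lia)).
  pose proof (vsub_tri (A (u (phi (S N)))) l (A (u (phi N)))) as Ht.
  rewrite (vnorm_sub_sym l) in Ht. lra.
Qed.

Fixpoint lsum (l : list X) : R := match l with nil => 0 | y :: l => vnorm y + lsum l end.
Lemma lsum_in l y : In y l -> vnorm y <= lsum l.
Proof.
  assert (Hp : forall l, 0 <= lsum l).
  { intros l0; induction l0 as [|z l0 IH]; simpl. lra. pose proof (vnorm_ge0 z). lra. }
  induction l as [|z l IH]; simpl. tauto. intros [->|H].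
  - specialize (Hp l). lra.
  - pose proof (vnorm_ge0 z). specialize (IH H). lra.
Qed.

Lemma compact_bnd (A : X -> X) : compact_op A -> opbnd A.
Proof.
  intros HA. destruct (TB A 1 HA) as [ys Hys]. lra.
  exists (1 + lsum ys). intros x Hx. destruct (Hys x Hx) as [y [Hy1 Hy2]].
  pose proof (vnorm_le_sub (A x) y). pose proof (lsum_in _ _ Hy1). lra.
Qed.

Lemma opbnd_sub (A B : X -> X) : opbnd A -> opbnd B -> opbnd (opsub A B).
Proof.
  intros [C1 H1] [C2 H2]. exists (C1 + C2). intros x Hx. unfold opsub.
  pose proof (vnorm_sub_le (A x) (B x)). specialize (H1 x Hx). specialize (H2 x Hx). lra.
Qed.

Lemma opbnd_comb (A B : X -> X) t s : opbnd A -> opbnd B ->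
  opbnd (fun x => vadd (vscal (sofR k t) (A x)) (vscal (sofR k s) (B x))).
Proof.
  intros [C1 H1] [C2 H2]. exists (Rabs t * C1 + Rabs s * C2). intros x Hx.
  eapply Rle_trans. apply vnorm_tri. rewrite !vnorm_scal, !sabs_ofR.
  specialize (H1 x Hx). specialize (H2 x Hx). pose proof (Rabs_pos t). pose proof (Rabs_pos s).
  apply Rplus_le_compat; apply Rmult_le_compat_l; auto.
Qed.

Definition nb (p0 : (X -> scal k) * X) (P : (X -> scal k) * X -> Prop) : Prop :=
  exists (xs : list X) (fs : list (X -> scal k)) (eps : R),
      0 < eps /\ (forall f, In f fs -> is_dual f) /\
      forall q, inB q ->
        (forall x, In x xs -> sabs k (ssub k (fst q x) (fst p0 x)) < eps) ->
        (forall f, In f fs -> sabs k (ssub k (f (snd q)) (f (snd p0))) < eps) ->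
        P q.

Lemma nb_mono p P Q : nb p P -> (forall q, inB q -> P q -> Q q) -> nb p Q.
Proof.
  intros [xs [fs [e [He [Hf H]]]]] HPQ. exists xs, fs, e. split; [|split]; auto.
Qed.

Lemma nb_and p P Q : nb p P -> nb p Q -> nb p (fun q => P q /\ Q q).
Proof.
  intros [xs [fs [e [He [Hf H]]]]] [xs' [fs' [e' [He' [Hf' H']]]]].
  exists (xs ++ xs'), (fs ++ fs'), (Rmin e e'). split. apply Rmin_glb_lt; auto. split.
  - intros f Hin. apply in_app_or in Hin. destruct Hin; auto.
  - pose proof (Rmin_l e e'). pose proof (Rmin_r e e').
    intros q Hq Hx Hfs. split.
    + apply H; auto. intros x Hin. specialize (Hx x (in_or_app _ _ _ (or_introl Hin))). lra.
      intros f Hin. specialize (Hfs f (in_or_app _ _ _ (or_introl Hin))). lra.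
    + apply H'; auto. intros x Hin. specialize (Hx x (in_or_app _ _ _ (or_intror Hin))). lra.
      intros f Hin. specialize (Hfs f (in_or_app _ _ _ (or_intror Hin))). lra.
Qed.

Lemma nb_cont (A : X -> X) p0 eps : compact_op A -> inB p0 -> 0 < eps ->
  nb p0 (fun q => sabs k (ssub k (fst q (A (snd q))) (fst p0 (A (snd p0)))) < eps).
Proof.
  intros HA Hp0 He. destruct p0 as [g0 x0]. destruct Hp0 as [Hg0 [Hd0 Hx0]]. simpl in *.
  destruct (TB A (eps/4) HA) as [ys Hys]. lra.
  destruct (compact_bnd A HA) as [C HC].
  pose proof HA as [HAa [HAs _]].
  assert (Hdual : is_dual (fun z => g0 (A z))).
  { pose proof Hg0 as [Ga [Gs _]]. split. intros x y. rewrite HAa, Ga. auto.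
    split. intros a x. rewrite HAs, Gs. auto.
    exists C. apply hom_scale_bound. intros a x. rewrite HAs, Gs; auto.
    intros x Hx. eapply Rle_trans. apply dual_bound; auto. auto. }
  exists ys, ((fun z => g0 (A z)) :: nil), (eps/4). split. lra. split.
  - intros f [<-|[]]. auto.
  - intros [g x] [Hg [Hd Hx]] Hxs Hfs. simpl in *.
    destruct (Hys x Hx) as [y [Hy1 Hy2]].
    specialize (Hxs y Hy1). specialize (Hfs _ (or_introl eq_refl)). simpl in Hfs, Hxs.
    pose proof (dual_bound g (vsub (A x) y) Hg Hd) as B1. rewrite dual_sub in B1 by auto.
    pose proof (dual_bound g0 (vsub y (A x)) Hg0 Hd0) as B3. rewrite dual_sub in B3 by auto.
    rewrite vnorm_sub_sym in B3.
    pose proof (ssub_tri k (g (A x)) (g y) (g0 (A x0))).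
    pose proof (ssub_tri k (g y) (g0 y) (g0 (A x0))).
    pose proof (ssub_tri k (g0 y) (g0 (A x)) (g0 (A x0))).
    lra.
Qed.

Lemma nb_diff (A1 A2 : X -> X) p0 eps : compact_op A1 -> compact_op A2 -> inB p0 -> 0 < eps ->
  nb p0 (fun q => sabs k (ssub k (fst q (opsub A1 A2 (snd q))) (fst p0 (opsub A1 A2 (snd p0)))) < eps).
Proof.
  intros H1 H2 Hp He.
  assert (He2 : 0 < eps/2) by lra.
  eapply nb_mono. apply nb_and. apply (nb_cont A1 p0 (eps/2) H1 Hp He2). apply (nb_cont A2 p0 (eps/2) H2 Hp He2).
  intros q Hq [Ha Hb]. destruct Hq as [Hg _]. destruct Hp as [Hg0 _].
  unfold opsub. rewrite !dual_sub by auto.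
  pose proof (ssub_diff k (fst q (A1 (snd q))) (fst q (A2 (snd q))) (fst p0 (A1 (snd p0))) (fst p0 (A2 (snd p0)))).
  lra.
Qed.

End O.

Lemma fold_min (A : Type) (f : A -> R) (l : list A) : (forall i, 0 < f i) ->
  0 < fold_right (fun i acc => Rmin (f i) acc) 1 l /\
  forall i, In i l -> fold_right (fun i acc => Rmin (f i) acc) 1 l <= f i.
Proof.
  intros Hf. induction l as [|a l [IH1 IH2]]; simpl. split. lra. tauto.
  split. apply Rmin_glb_lt; auto.
  intros i [->|Hi]. apply Rmin_l. eapply Rle_trans. apply Rmin_r. auto.
Qed.

Lemma ssub_self k a : sabs k (ssub k a a) = 0.
Proof. replace (ssub k a a) with (sofR k 0). rewrite sabs_ofR. apply Rabs_R0. unfold ssub; seq k. Qed.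

Lemma sre_split k l a b c : sre k (smul k l (ssub k a c)) = sre k (smul k l (ssub k a b)) - sre k (smul k l (ssub k c b)).
Proof. unfold ssub. destruct k; simpl; sdes; simpl; ring. Qed.

Lemma sre_split2 k l a b t : sre k (smul k l (ssub k a (smul k (sofR k t) b))) = sre k (smul k l a) - t * sre k (smul k l b).
Proof. unfold ssub. destruct k; simpl; sdes; simpl; ring. Qed.

Lemma comb_id1 k gV gL t : ssub k (sadd k (smul k (sofR k t) gV) (smul k (sofR k (1 - t)) gL)) gL
  = smul k (sofR k t) (ssub k gV gL).
Proof. unfold ssub; seq k. Qed.
Lemma comb_id2 k gT gV gL t : ssub k gT (sadd k (smul k (sofR k t) gV) (smul k (sofR k (1 - t)) gL))
  = ssub k (ssub k gT gL) (smul k (sofR k t) (ssub k gV gL)).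
Proof. unfold ssub; seq k. Qed.

Section M.
Context {k : Kind} {X : NormedSpace k}.
Implicit Types (W : (X -> scal k) * X -> Prop).

Lemma normW_lub W (A : X -> X) : compactB W -> (exists p, W p) -> opbnd A ->
  is_lub (fun v => exists p, W p /\ v = sabs k (fst p (A (snd p)))) (normW W A).
Proof.
  intros [HWB _] [p0 Hp0] [C HC]. apply Rsup_lub. exists (sabs k (fst p0 (A (snd p0)))), p0; auto.
  exists C. intros v [p [Hp ->]]. destruct (HWB p Hp) as [Hd [Hn Hx]].
  eapply Rle_trans. apply dual_bound; auto. auto.
Qed.

Lemma normW_ub W (A : X -> X) p : compactB W -> opbnd A -> W p ->
  sabs k (fst p (A (snd p))) <= normW W A.
Proof.
  intros HW HA Hp. apply (lub_ub _ _ _ (normW_lub W A HW (ex_intro _ p Hp) HA)). exists p; auto.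
Qed.

Lemma dir2 W (T L V : X -> X) r :
  compactB W -> compact_op T -> compact_op L -> compact_op V ->
  (exists p, inWS W (opsub T L) p /\ sre k (fst p (opsub V L (snd p))) <= - r * normW W (opsub V L)) ->
  normW W (opsub T V) >= normW W (opsub T L) + r * normW W (opsub V L).
Proof.
  intros HW HT HL HV [p [[[g [l [Hl [Hgw Hfp]]]] HM] Hre]].
  set (x := snd p) in *.
  destruct (proj1 HW _ Hgw) as [Hg _]. simpl in Hg.
  pose proof (normW_ub W (opsub T V) (g, x) HW (opbnd_sub _ _ (compact_bnd _ HT) (compact_bnd _ HV)) Hgw) as H1.
  simpl in H1. rewrite <- (sabs_Zmul k l) in H1 by auto.
  pose proof (sre_le k (smul k l (g (opsub T V x)))).
  rewrite Hfp in HM, Hre. unfold opsub in *. rewrite dual_sub in * by auto.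
  rewrite (sre_split k l _ (g (L x))) in H.
  apply (f_equal (sre k)) in HM. rewrite sre_ofR in HM. lra.
Qed.

End M.

Section D.
Context {k : Kind} {X : NormedSpace k}.
Implicit Types (W : (X -> scal k) * X -> Prop).

Definition av (A B : X -> X) (q : (X -> scal k) * X) : scal k := fst q (opsub A B (snd q)).

Lemma dir1 W (U : (X -> X) -> Prop) (T L V : X -> X) r :
  compactB W -> (exists p, W p) -> (forall V, U V -> compact_op V) -> convexU U ->
  compact_op T -> U L -> U V -> 0 < r ->
  (forall V', U V' -> normW W (opsub T V') >= normW W (opsub T L) + r * normW W (opsub V' L)) ->
  exists p, inWS W (opsub T L) p /\ sre k (fst p (opsub V L (snd p))) <= - r * normW W (opsub V L).
Proof.
  intros HW Hne HU Hconv HT HLU HVU Hr H.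
  pose proof (HU L HLU) as HL. pose proof (HU V HVU) as HV.
  pose proof (compact_bnd _ HT) as bT. pose proof (compact_bnd _ HL) as bL. pose proof (compact_bnd _ HV) as bV.
  pose proof (opbnd_sub _ _ bT bL) as bTL. pose proof (opbnd_sub _ _ bV bL) as bVL.
  set (M := normW W (opsub T L)) in *. set (d := normW W (opsub V L)) in *.
  assert (Hd0 : 0 <= d).
  { destruct Hne as [p0 Hp0]. pose proof (normW_ub W (opsub V L) p0 HW bVL Hp0).
    pose proof (sabs_ge0 k (fst p0 (opsub V L (snd p0)))). unfold d; lra. }
  assert (Hclaim : exists w l, W w /\ Zscalar k l /\ M <= sre k (smul k l (av T L w)) /\
                     sre k (smul k l (av V L w)) <= - r * d).
  { apply NNPP; intro Hn.
    assert (Hpt : forall w, W w -> exists m, 0 < m /\ forall l, Zscalar k l ->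
       Rmax (M - sre k (smul k l (av T L w))) (sre k (smul k l (av V L w)) + r * d) >= m).
    { intros w Hw. apply Zs_min. intros l Hl. apply NNPP; intro H'. apply Hn. exists w, l.
      split; auto. split; auto. split; apply Rnot_lt_le; intro; apply H'; [left|right]; lra. }
    set (O := fun (i : ((X -> scal k) * X * R)%type) (q : (X -> scal k) * X) =>
       W (fst i) /\ 0 < snd i /\
       (forall l, Zscalar k l ->
          Rmax (M - sre k (smul k l (av T L (fst i)))) (sre k (smul k l (av V L (fst i))) + r * d) >= snd i) /\
       sabs k (ssub k (av T L q) (av T L (fst i))) < snd i / 4 /\
       sabs k (ssub k (av V L q) (av V L (fst i))) < snd i / 4).
    pose proof HW as [HWB Hcov].
    destruct (Hcov _ O) as [li Hli].
    - intros i p Hp Op. change (nb p (O i)).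
      destruct Op as [O1 [O2 [O3 [O4 O5]]]].
      assert (He1 : 0 < snd i / 4 - sabs k (ssub k (av T L p) (av T L (fst i)))) by lra.
      assert (He2 : 0 < snd i / 4 - sabs k (ssub k (av V L p) (av V L (fst i)))) by lra.
      pose proof (nb_and _ _ _ (nb_diff T L p _ HT HL Hp He1) (nb_diff V L p _ HV HL Hp He2)) as Hnb.
      apply (nb_mono _ _ _ Hnb). intros q Hq [Q1 Q2].
      unfold O. split; auto. split; auto. split; auto. unfold av in *.
      pose proof (ssub_tri k (fst q (opsub T L (snd q))) (fst p (opsub T L (snd p))) (fst (fst i) (opsub T L (snd (fst i))))).
      pose proof (ssub_tri k (fst q (opsub V L (snd q))) (fst p (opsub V L (snd p))) (fst (fst i) (opsub V L (snd (fst i))))).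
      split; lra.
    - intros w Hw. destruct (Hpt w Hw) as [m [Hm Hmb]]. exists (w, m). unfold O; simpl.
      rewrite !ssub_self. repeat split; auto; lra.
    - set (f := fun i : ((X -> scal k) * X * R)%type => if Rlt_dec 0 (snd i) then snd i / 2 else 1).
      destruct (fold_min _ f li) as [Hdel Hdel2].
      { intros i. unfold f. destruct Rlt_dec; lra. }
      set (del := fold_right (fun i acc => Rmin (f i) acc) 1 li) in *.
      assert (Hdel3 : forall q, W q -> forall l, Zscalar k l ->
          Rmax (M - sre k (smul k l (av T L q))) (sre k (smul k l (av V L q)) + r * d) >= del).
      { intros q Hq l Hl. destruct (Hli q Hq) as [i [Hi Oi]].
        destruct Oi as [O1 [O2 [O3 [O4 O5]]]].
        specialize (Hdel2 i Hi). unfold f in Hdel2. destruct Rlt_dec; [|lra].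
        specialize (O3 l Hl).
        pose proof (re_lip k l (av T L q) (av T L (fst i)) Hl) as R1.
        pose proof (re_lip k l (av V L (fst i)) (av V L q) Hl) as R2.
        rewrite ssub_sym in R2.
        unfold Rmax in O3 |- *. destruct Rle_dec; destruct Rle_dec; lra. }
      set (t := Rmin 1 (del / (d + 2))).
      assert (Ht0 : 0 < t). { apply Rmin_glb_lt. lra. apply Rdiv_lt_0_compat; lra. }
      assert (Ht1 : t <= 1) by apply Rmin_l.
      assert (Ht2 : t * (d + 2) <= del).
      { pose proof (Rmin_r 1 (del / (d + 2))). fold t in H0.
        replace del with (del / (d + 2) * (d + 2)) by (field; lra).
        apply Rmult_le_compat_r; lra. }
      set (Lt := fun x => vadd (vscal (sofR k t) (V x)) (vscal (sofR k (1 - t)) (L x))).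
      assert (HLt : U Lt) by (apply Hconv; auto; lra).
      pose proof (opbnd_comb V L t (1 - t) bV bL) as bLt. fold Lt in bLt.
      specialize (H Lt HLt).
      set (N := normW W (opsub T Lt)) in *. set (dt := normW W (opsub Lt L)) in *.
      assert (Hlin : forall q, W q -> is_dual (fst q)) by (intros q Hq; apply (HWB q Hq)).
      assert (Hb1 : forall q, W q -> fst q (opsub Lt L (snd q)) = smul k (sofR k t) (av V L q)).
      { intros q Hq. destruct (Hlin q Hq) as [Ga [Gs _]]. unfold av, opsub, Lt.
        rewrite !dual_sub, Ga, !Gs by auto. apply comb_id1. }
      assert (Hb2 : forall q, W q -> fst q (opsub T Lt (snd q)) = ssub k (av T L q) (smul k (sofR k t) (av V L q))).
      { intros q Hq. destruct (Hlin q Hq) as [Ga [Gs _]]. unfold av, opsub, Lt.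
        rewrite !dual_sub, Ga, !Gs by auto. apply comb_id2. }
      assert (Hdt : t * d <= dt).
      { assert (d <= dt / t).
        { apply (proj2 (normW_lub W (opsub V L) HW Hne bVL)). intros v [w [Hw ->]].
          pose proof (normW_ub W (opsub Lt L) w HW (opbnd_sub _ _ bLt bL) Hw) as Hu.
          fold dt in Hu. rewrite Hb1, sabs_mul, sabs_ofR, Rabs_right in Hu by (auto; lra).
          unfold av in Hu. apply (Rmult_le_reg_l t). auto.
          replace (t * (dt / t)) with dt by (field; lra). lra. }
        replace dt with (t * (dt / t)) by (field; lra). apply Rmult_le_compat_l; lra. }
      destruct (lub_approx _ _ (t * t) (normW_lub W (opsub T Lt) HW Hne (opbnd_sub _ _ bT bLt)))
        as [v [[w [Hw ->]] Happ]]. nra.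
      fold N in Happ. rewrite Hb2 in Happ by auto.
      destruct (Zs_exists k (ssub k (av T L w) (smul k (sofR k t) (av V L w)))) as [l [Hl Hre]].
      rewrite sre_split2 in Hre.
      pose proof (Hdel3 w Hw l Hl) as Hmax.
      pose proof (sre_le k (smul k l (av T L w))) as A1. rewrite sabs_Zmul in A1 by auto.
      pose proof (normW_ub W (opsub T L) w HW bTL Hw) as A2. fold M in A2. change (sabs k (av T L w) <= M) in A2.
      pose proof (sre_ge k (smul k l (av V L w))) as B1. rewrite sabs_Zmul in B1 by auto.
      pose proof (normW_ub W (opsub V L) w HW bVL Hw) as B2. fold d in B2. change (sabs k (av V L w) <= d) in B2.
      set (A := sre k (smul k l (av T L w))) in *. set (B := sre k (smul k l (av V L w))) in *.
      assert (Hrd : r * (t * d) <= r * dt) by (apply Rmult_le_compat_l; lra).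
      assert (HtB : - t * B <= t * d) by nra.
      assert (Hrtd : 0 <= r * (t * d)) by (apply Rmult_le_pos; nra).
      assert (K1 : A - t * B > M + r * (t * d) - t * t) by lra.
      assert (K2 : B + r * d < t).
      { apply (Rmult_lt_reg_l t). auto. assert (t * (B + r * d) < t * t) by nra. lra. }
      assert (K3 : M - A < t * t + t * d) by lra.
      assert (t * t <= t) by nra.
      unfold Rmax in Hmax. destruct Rle_dec; nra. }
  destruct Hclaim as [w [l [Hw [Hl [HA HB]]]]].
  exists (fun y => smul k l (fst w y), snd w). split.
  - split.
    + exists (fst w), l. split; auto. split. simpl. rewrite <- surjective_pairing. auto. intro y; reflexivity.
    + simpl. apply scal_eqM. auto. rewrite sabs_Zmul by auto. apply normW_ub; auto.
  - simpl. auto.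
Qed.

End D.

Theorem theorem2p3 (k : Kind) (X : NormedSpace k)
  (W : (X -> scal k) * X -> Prop) (U : (X -> X) -> Prop)
  (T L : X -> X) (r : R) :
  banach X -> reflexive X ->
  compactB W -> (exists p, W p) ->
  (forall V, U V -> compact_op V) -> saturated W U ->
  convexU U -> (exists V, U V) ->
  compact_op T -> U L -> 0 < r ->
  ((forall V, U V ->
      normW W (opsub T V) >= normW W (opsub T L) + r * normW W (opsub V L)) <->
   (forall V, U V ->
      exists p, inWS W (opsub T L) p /\
        sre k (fst p (opsub V L (snd p))) <= - r * normW W (opsub V L))).
Proof.
  intros Hban Href HW Hne HU Hsat Hconv HUne HT HL Hr. split.
  - intros H V HV. apply (dir1 W U T L V r); auto.
  - intros H V HV. apply dir2; auto.
Qed.
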